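(* Let $H:[0,1]\times\mathbb R\to\mathbb R$ be continuous, coercive in $p$, and quasiconvex in $p$ with $\mathrm{Int}\{p: H(s,p)\le b\}=\{p:H(s,p)<b\}$ for all $s,b$. Let $a_H=\max_{s}\min_{p}H(s,p)$, let $a\ge a_H$, and if $a=a_H$ assume that $s\mapsto\min_pH(s,p)$ is constant on $[0,1]$. Let $\sigma^+_a(s)=\max\{p:H(s,p)=a\}$. Let $w$ be continuous on $[0,1]$ and a viscosity solution of $H(s,w'(s))=a$ in $(0,1)$. Then the following are equivalent: (1) $H(1,\varphi'(1))\ge a$ for every $\varphi\in C^1([0,1])$ that is a constrained subtangent to $w$ at $1$, i.e. $\varphi(1)=w(1)$ and $w\ge\varphi$ on $(1-\delta,1)$ for some $\delta>0$; (2) $w(s)=w(0)+\int_0^s\sigma^+_a(t)\,dt$ for all $s\in[0,1]$ (i.e. $w$ is the maximal subsolution of $H(s,u')=a$ in $(0,1)$ taking the value $w(0)$ at $0$).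
   Context: Coercive in $p$ means $H(s,p)\to+\infty$ as $|p|\to\infty$ uniformly in $s$; quasiconvex means convex sublevel sets in $p$. Sub/solutions are in the viscosity sense. *)

(* Defs.v *)
From Stdlib Require Export Reals.
Open Scope R_scope.

Definition in01 (s : R) : Prop := 0 <= s <= 1.

Definition H_cont01 (H : R -> R -> R) : Prop :=
  forall s p, in01 s -> forall eps, 0 < eps -> exists del, 0 < del /\
    forall s' p', in01 s' -> Rabs (s' - s) < del -> Rabs (p' - p) < del ->
      Rabs (H s' p' - H s p) < eps.

Definition coercive01 (H : R -> R -> R) : Prop :=
  forall M, exists K, forall s p, in01 s -> K < Rabs p -> M < H s p.

Definition quasiconvex01 (H : R -> R -> R) : Prop :=
  forall s, in01 s -> forall b p q t, H s p <= b -> H s q <= b -> 0 <= t <= 1 ->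
    H s (t * p + (1 - t) * q) <= b.

Definition in_interior (P : R -> Prop) (p : R) : Prop :=
  exists eps, 0 < eps /\ forall q, Rabs (q - p) < eps -> P q.

Definition interior_cond01 (H : R -> R -> R) : Prop :=
  forall s b p, in01 s -> (in_interior (fun q => H s q <= b) p <-> H s p < b).

Definition is_min_value (f : R -> R) (m : R) : Prop :=
  (exists p, f p = m) /\ forall p, m <= f p.

Definition is_max_on (g : R -> R) (A : R -> Prop) (v : R) : Prop :=
  (exists s, A s /\ g s = v) /\ forall s, A s -> g s <= v.

Definition is_max_elem (P : R -> Prop) (v : R) : Prop :=
  P v /\ forall p, P p -> p <= v.

Definition cont01 (w : R -> R) : Prop :=
  forall x, in01 x -> forall eps, 0 < eps -> exists del, 0 < del /\
    forall y, in01 y -> Rabs (y - x) < del -> Rabs (w y - w x) < eps.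

Definition is_C1 (phi dphi : R -> R) : Prop :=
  (forall x, derivable_pt_lim phi x (dphi x)) /\ continuity dphi.

Definition visc_sub (H : R -> R -> R) (a : R) (w : R -> R) : Prop :=
  forall s0, 0 < s0 < 1 -> forall phi dphi, is_C1 phi dphi ->
    (exists d, 0 < d /\ forall x, Rabs (x - s0) < d -> w x - phi x <= w s0 - phi s0) ->
    H s0 (dphi s0) <= a.

Definition visc_super (H : R -> R -> R) (a : R) (w : R -> R) : Prop :=
  forall s0, 0 < s0 < 1 -> forall phi dphi, is_C1 phi dphi ->
    (exists d, 0 < d /\ forall x, Rabs (x - s0) < d -> w s0 - phi s0 <= w x - phi x) ->
    a <= H s0 (dphi s0).

Definition visc_sol (H : R -> R -> R) (a : R) (w : R -> R) : Prop :=
  visc_sub H a w /\ visc_super H a w.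

(* Main.v *)
Require Import Defs.
From Stdlib Require Import Reals Lra Lia IndefiniteDescription.
From Coquelicot Require Import Coquelicot.
Open Scope R_scope.

Definition clamp (t : R) : R := Rmax 0 (Rmin 1 t).
Definition ext (f : R -> R) (t : R) : R := f (clamp t).
Definition prim (f : R -> R) (t : R) : R := RInt (ext f) 0 t.

Lemma clamp_in01 t : in01 (clamp t).
Proof. unfold clamp, in01, Rmax, Rmin. repeat destruct Rle_dec; lra. Qed.

Lemma clamp_id t : in01 t -> clamp t = t.
Proof. unfold clamp, in01, Rmax, Rmin. intros. repeat destruct Rle_dec; lra. Qed.

Lemma clamp_lip x y : Rabs (clamp y - clamp x) <= Rabs (y - x).
Proof.
  unfold clamp, Rmax, Rmin. repeat destruct Rle_dec;
  repeat (match goal with |- context [Rabs ?u] => destruct (Rcase_abs u) as [?|?];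
     [rewrite (Rabs_left u) by lra | rewrite (Rabs_pos_eq u) by lra] end); lra.
Qed.

Lemma ext_cont f : cont01 f -> continuity (ext f).
Proof.
  intros Hf x. unfold continuity_pt, continue_in, limit1_in, limit_in. simpl. unfold R_dist.
  intros eps Heps. destruct (Hf (clamp x) (clamp_in01 x) eps Heps) as [del [Hd Hd']].
  exists del. split; [lra|]. intros y [_ Hy]. unfold ext.
  apply Hd'. apply clamp_in01. eapply Rle_lt_trans; [apply clamp_lip|]. exact Hy.
Qed.

Lemma ext_id f t : in01 t -> ext f t = f t.
Proof. intros; unfold ext; rewrite clamp_id; auto. Qed.

Lemma prim_deriv f : cont01 f -> forall t, derivable_pt_lim (prim f) t (ext f t).
Proof.
  intros Hf t. apply is_derive_Reals. unfold prim.
  apply (is_derive_RInt (ext f) (fun b => RInt (ext f) 0 b) 0 t).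
  - apply filter_forall. intros b. apply (@RInt_correct R_CompleteNormedModule). apply ex_RInt_continuous.
    intros z _. apply continuity_pt_filterlim. apply ext_cont; auto.
  - apply continuity_pt_filterlim. apply ext_cont; auto.
Qed.

Lemma prim_C1 f : cont01 f -> is_C1 (prim f) (ext f).
Proof. intros Hf; split; [apply prim_deriv; auto | apply ext_cont; auto]. Qed.

Lemma prim_cont f : cont01 f -> continuity (prim f).
Proof. intros Hf t. apply derivable_continuous_pt. exists (ext f t). apply prim_deriv; auto. Qed.

Lemma prim0 f : prim f 0 = 0.
Proof. unfold prim. rewrite RInt_point. reflexivity. Qed.

Lemma prim_Riemann f s : cont01 f -> in01 s ->
  exists pr : Riemann_integrable f 0 s, RiemannInt pr = prim f s.
Proof.
  intros Hf Hs.
  assert (E : forall x, Rmin 0 s < x < Rmax 0 s -> ext f x = f x).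
  { intros x Hx. rewrite Rmin_left in Hx by (unfold in01 in Hs; lra).
    rewrite Rmax_right in Hx by (unfold in01 in Hs; lra).
    apply ext_id. unfold in01 in *; lra. }
  assert (Ex : ex_RInt (ext f) 0 s).
  { apply (@ex_RInt_continuous R_CompleteNormedModule). intros z _. apply continuity_pt_filterlim. apply ext_cont; auto. }
  exists (ex_RInt_Reals_0 _ _ _ (ex_RInt_ext _ _ _ _ E Ex)).
  rewrite <- RInt_Reals. unfold prim. symmetry. apply RInt_ext. exact E.
Qed.

Lemma in01_dec z : {in01 z} + {~ in01 z}.
Proof. unfold in01. destruct (Rle_dec 0 z); destruct (Rle_dec z 1); [left; lra|right; lra|right; lra|right; lra]. Qed.

Lemma Hp_cont H s : H_cont01 H -> in01 s -> continuity (H s).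
Proof.
  intros Hc Hs p. unfold continuity_pt, continue_in, limit1_in, limit_in. simpl. unfold R_dist.
  intros eps Heps. destruct (Hc s p Hs eps Heps) as [del [Hd Hd']].
  exists del; split; [lra|]. intros q [_ Hq]. apply Hd'; auto.
  rewrite Rminus_diag, Rabs_R0; lra.
Qed.

Lemma H_gt_near H x p c : H_cont01 H -> in01 x -> c < H x p ->
  exists del, 0 < del /\ forall y, in01 y -> Rabs (y - x) < del -> c < H y p.
Proof.
  intros Hc Hx Hlt. destruct (Hc x p Hx (H x p - c)) as [del [Hd Hd']]; [lra|].
  exists del; split; auto. intros y Hy Hyx.
  assert (A := Hd' y p Hy Hyx). rewrite Rminus_diag, Rabs_R0 in A. specialize (A Hd).
  apply Rabs_def2 in A. lra.
Qed.

Lemma H_lt_near H x p c : H_cont01 H -> in01 x -> H x p < c ->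
  exists del, 0 < del /\ forall y, in01 y -> Rabs (y - x) < del -> H y p < c.
Proof.
  intros Hc Hx Hlt. destruct (Hc x p Hx (c - H x p)) as [del [Hd Hd']]; [lra|].
  exists del; split; auto. intros y Hy Hyx.
  assert (A := Hd' y p Hy Hyx). rewrite Rminus_diag, Rabs_R0 in A. specialize (A Hd).
  apply Rabs_def2 in A. lra.
Qed.

Lemma between H s p q r c : quasiconvex01 H -> in01 s -> H s p <= c -> H s q <= c ->
  Rmin p q <= r <= Rmax p q -> H s r <= c.
Proof.
  intros Hq Hs Hp Hqq Hr.
  destruct (Req_dec p q) as [E|E].
  - subst q. rewrite Rmin_left, Rmax_left in Hr by lra. replace r with p by lra. auto.
  - set (t := (r - q) / (p - q)).
    assert (Er : r = t * p + (1 - t) * q) by (unfold t; field; lra).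
    rewrite Er. apply Hq; auto. unfold t.
    unfold Rmin, Rmax in Hr; destruct Rle_dec in Hr.
    + assert (p < q) by lra. split.
      * unfold Rdiv. replace ((r - q) * / (p - q)) with ((q - r) / (q - p)) by (field; lra).
        apply Rdiv_le_0_compat; lra.
      * replace ((r - q) / (p - q)) with ((q - r) / (q - p)) by (field; lra).
        apply Rmult_le_reg_r with (q - p); [lra|]. unfold Rdiv; rewrite Rmult_assoc, Rinv_l by lra. lra.
    + assert (q < p) by lra. split.
      * apply Rdiv_le_0_compat; lra.
      * apply Rmult_le_reg_r with (p - q); [lra|]. unfold Rdiv; rewrite Rmult_assoc, Rinv_l by lra. lra.
Qed.

Lemma interior_lt H s p q r c : quasiconvex01 H -> interior_cond01 H -> in01 s ->
  H s p <= c -> H s q <= c -> p < r < q -> H s r < c.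
Proof.
  intros Hq Hi Hs Hp Hqq Hr. apply (proj1 (Hi s c r Hs)).
  exists (Rmin (r - p) (q - r)). split. { apply Rmin_pos; lra. }
  intros x Hx. apply (between H s p q x c); auto.
  rewrite Rmin_left, Rmax_right by lra.
  apply Rabs_def2 in Hx. assert (Rmin (r - p) (q - r) <= r - p) by apply Rmin_l.
  assert (Rmin (r - p) (q - r) <= q - r) by apply Rmin_r. lra.
Qed.

Lemma ivt_level H s p q b : H_cont01 H -> in01 s -> p < q -> H s p < b -> b < H s q ->
  exists z, p <= z <= q /\ H s z = b.
Proof.
  intros Hc Hs Hpq Hp Hq.
  assert (C : continuity (fun x => H s x - b)).
  { apply continuity_minus. apply Hp_cont; auto. apply continuity_const. intros ??; auto. }
  destruct (IVT _ p q C Hpq) as [z [Hz Hz']]; [lra|lra|]. exists z; split; auto; lra.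
Qed.

Lemma big_point H s x b : coercive01 H -> in01 s -> exists q, x < q /\ b < H s q.
Proof.
  intros Hco Hs. destruct (Hco b) as [K HK].
  exists (Rmax x K + 1). split. { assert (x <= Rmax x K) by apply Rmax_l. lra. }
  apply HK; auto. assert (K <= Rmax x K) by apply Rmax_r.
  eapply Rlt_le_trans; [|apply Rle_abs]. lra.
Qed.

Lemma above_max H s b v p : H_cont01 H -> coercive01 H -> in01 s ->
  is_max_elem (fun p => H s p = b) v -> v < p -> b < H s p.
Proof.
  intros Hc Hco Hs [Hv Hmax] Hp.
  destruct (Rlt_le_dec b (H s p)) as [?|Hle]; auto. exfalso.
  destruct (Rle_lt_or_eq_dec _ _ Hle) as [Hlt|Heq].
  - destruct (big_point H s p b Hco Hs) as [q [Hpq Hq]].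
    destruct (ivt_level H s p q b Hc Hs Hpq Hlt Hq) as [z [Hz Hz']].
    specialize (Hmax z Hz'). lra.
  - specialize (Hmax p Heq). lra.
Qed.

Lemma strict_min H s m p q : quasiconvex01 H -> interior_cond01 H -> in01 s ->
  (forall p, m <= H s p) -> H s p = m -> H s q = m -> p < q -> False.
Proof.
  intros Hq Hi Hs Hm Hp Hqq Hpq.
  assert (A : H s ((p + q) / 2) < m).
  { apply (interior_lt H s p q); auto; lra. }
  specialize (Hm ((p + q) / 2)). lra.
Qed.

Lemma min3 a b c : 0 < a -> 0 < b -> 0 < c -> exists d, 0 < d /\ d <= a /\ d <= b /\ d <= c.
Proof.
  intros. exists (Rmin a (Rmin b c)). repeat split.
  - repeat apply Rmin_pos; auto.
  - apply Rmin_l.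
  - eapply Rle_trans; [apply Rmin_r|apply Rmin_l].
  - eapply Rle_trans; [apply Rmin_r|apply Rmin_r].
Qed.

Lemma lvl_cont H b m sg : H_cont01 H -> coercive01 H -> quasiconvex01 H -> interior_cond01 H ->
  (forall s, in01 s -> is_min_value (H s) (m s)) -> (forall s, in01 s -> m s <= b) ->
  (forall s, in01 s -> is_max_elem (fun p => H s p = b) (sg s)) -> cont01 sg.
Proof.
  intros Hc Hco Hq Hi Hm Hmb Hsg x Hx eps Heps.
  assert (A1 : b < H x (sg x + eps)) by (apply (above_max H x b (sg x)); auto; lra).
  set (eta := (H x (sg x + eps) - b) / 2).
  destruct (H_gt_near H x (sg x + eps) (b + eta) Hc Hx) as [d1 [Hd1 Hd1']]; [unfold eta; lra|].
  destruct (H_lt_near H x (sg x) (b + eta) Hc Hx) as [d2 [Hd2 Hd2']].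
  { rewrite (proj1 (Hsg x Hx)). unfold eta; lra. }
  assert (UP : forall y, in01 y -> Rabs (y - x) < Rmin d1 d2 -> sg y < sg x + eps).
  { intros y Hy Hyx. destruct (Rlt_le_dec (sg y) (sg x + eps)) as [?|Hge]; auto. exfalso.
    assert (B : H y (sg x + eps) <= b + eta).
    { apply (between H y (sg x) (sg y)); auto.
      - left. apply Hd2'; auto. eapply Rlt_le_trans; [exact Hyx|apply Rmin_r].
      - rewrite (proj1 (Hsg y Hy)). unfold eta; lra.
      - rewrite Rmin_left, Rmax_right; lra. }
    assert (C : b + eta < H y (sg x + eps)).
    { apply Hd1'; auto. eapply Rlt_le_trans; [exact Hyx|apply Rmin_l]. }
    lra. }
  assert (LO : exists d3, 0 < d3 /\ forall y, in01 y -> Rabs (y - x) < d3 -> sg x - eps < sg y).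
  { destruct (Hm x Hx) as [[p0 Hp0] Hmin].
    destruct (Rle_lt_or_eq_dec _ _ (Hmb x Hx)) as [Hlt|Heq].
    - assert (Hp0s : p0 <= sg x).
      { destruct (Rle_lt_dec p0 (sg x)) as [?|Hg]; auto.
        assert (b < H x p0) by (apply (above_max H x b (sg x)); auto). lra. }
      set (q := Rmax p0 (sg x - eps / 2)).
      assert (Hq1 : sg x - eps / 2 <= q) by apply Rmax_r.
      assert (Hqb : H x q < b).
      { unfold q, Rmax. destruct Rle_dec as [Hle|Hnle].
        - destruct (Rle_lt_or_eq_dec _ _ Hle) as [Hl|E].
          + apply (interior_lt H x p0 (sg x)); auto. lra. rewrite (proj1 (Hsg x Hx)); lra. lra.
          + rewrite <- E. lra.
        - lra. }
      destruct (H_lt_near H x q b Hc Hx Hqb) as [d3 [Hd3 Hd3']].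
      exists d3; split; auto. intros y Hy Hyx.
      destruct (Rlt_le_dec (sg x - eps) (sg y)) as [?|Hle]; auto. exfalso.
      assert (b < H y q) by (apply (above_max H y b (sg y)); auto; lra).
      specialize (Hd3' y Hy Hyx). lra.
    - assert (A2 : b < H x (sg x - eps)).
      { destruct (Rle_lt_or_eq_dec _ _ (Hmin (sg x - eps))) as [?|E]; [lra|].
        exfalso. apply (strict_min H x (m x) (sg x - eps) (sg x)); auto; try lra.
        rewrite (proj1 (Hsg x Hx)); lra. }
      set (eta' := (H x (sg x - eps) - b) / 2).
      destruct (H_gt_near H x (sg x - eps) (b + eta') Hc Hx) as [d4 [Hd4 Hd4']]; [unfold eta'; lra|].
      destruct (H_lt_near H x (sg x) (b + eta') Hc Hx) as [d5 [Hd5 Hd5']].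
      { rewrite (proj1 (Hsg x Hx)). unfold eta'; lra. }
      exists (Rmin d4 d5); split; [apply Rmin_pos; auto|].
      intros y Hy Hyx.
      destruct (Rlt_le_dec (sg x - eps) (sg y)) as [?|Hle]; auto. exfalso.
      assert (B : H y (sg x - eps) <= b + eta').
      { apply (between H y (sg y) (sg x)); auto.
        - rewrite (proj1 (Hsg y Hy)). unfold eta'; lra.
        - left. apply Hd5'; auto. eapply Rlt_le_trans; [exact Hyx|apply Rmin_r].
        - rewrite Rmin_left, Rmax_right; lra. }
      assert (C : b + eta' < H y (sg x - eps)).
      { apply Hd4'; auto. eapply Rlt_le_trans; [exact Hyx|apply Rmin_l]. }
      lra. }
  destruct LO as [d3 [Hd3 Hd3']].
  destruct (min3 (Rmin d1 d2) d3 1) as [d [Hd [Hda [Hdb _]]]]; [apply Rmin_pos; auto|auto|lra|].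
  exists d; split; auto. intros y Hy Hyx. apply Rabs_def1.
  - assert (sg y < sg x + eps) by (apply UP; auto; lra). lra.
  - assert (sg x - eps < sg y) by (apply Hd3'; auto; lra). lra.
Qed.

Lemma lvl_exists H s mm b : H_cont01 H -> coercive01 H -> in01 s ->
  is_min_value (H s) mm -> mm < b -> exists v, is_max_elem (fun p => H s p = b) v.
Proof.
  intros Hc Hco Hs [[p0 Hp0] Hmin] Hb.
  set (E := fun p => H s p = b).
  assert (NE : exists p, E p).
  { destruct (big_point H s p0 b Hco Hs) as [q [Hq Hq']].
    destruct (ivt_level H s p0 q b Hc Hs Hq) as [z [_ Hz]]; [lra|auto|]. exists z; auto. }
  assert (BD : bound E).
  { destruct (Hco b) as [K HK]. exists K. intros p Hp.
    destruct (Rle_lt_dec p K) as [?|Hlt]; auto. exfalso.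
    assert (b < H s p) by (apply HK; auto; eapply Rlt_le_trans; [exact Hlt|apply Rle_abs]).
    unfold E in Hp; lra. }
  destruct (completeness E BD NE) as [v [Hub Hleast]].
  exists v. split; [|exact Hub].
  destruct (Req_dec (H s v) b) as [?|Hne]; auto. exfalso.
  set (e := Rabs (H s v - b)).
  assert (He : 0 < e) by (apply Rabs_pos_lt; lra).
  destruct (Hc s v Hs e He) as [del [Hd Hd']].
  assert (U : is_upper_bound E (v - del / 2)).
  { intros p Hp. destruct (Rle_lt_dec p (v - del / 2)) as [?|Hlt]; auto. exfalso.
    assert (p <= v) by (apply Hub; auto).
    assert (A : Rabs (H s p - H s v) < e).
    { apply Hd'; auto. rewrite Rminus_diag, Rabs_R0; lra. apply Rabs_def1; lra. }
    unfold E in Hp. rewrite Hp in A. unfold e in A. rewrite <- Rabs_Ropp in A.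
    replace (- (b - H s v)) with (H s v - b) in A by ring. lra. }
  specialize (Hleast _ U). lra.
Qed.

Lemma cont_pt_ed f x : continuity_pt f x -> forall eps, 0 < eps ->
  exists del, 0 < del /\ forall y, Rabs (y - x) < del -> Rabs (f y - f x) < eps.
Proof.
  unfold continuity_pt, continue_in, limit1_in, limit_in; simpl; unfold R_dist.
  intros Hf eps Heps. destruct (Hf eps Heps) as [d [Hd Hd']]. exists d; split; auto.
  intros y Hy. destruct (Req_dec y x) as [E|E].
  - subst. rewrite Rminus_diag, Rabs_R0; auto.
  - apply Hd'. split; auto. unfold D_x, no_cond. split; auto.
Qed.

Lemma poly_deriv K x0 N t :
  derivable_pt_lim (fun t => K * (t - x0)^N) t (K * (INR N * (t - x0)^(pred N))).
Proof. apply is_derive_Reals. auto_derive. auto. unfold Rminus. ring. Qed.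

Lemma poly_dcont K x0 N : continuity (fun t => K * (INR N * (t - x0)^(pred N))).
Proof. intros t. apply continuity_pt_filterlim. apply (@ex_derive_continuous R_AbsRing R_NormedModule (fun t => K * (INR N * (t - x0)^(pred N)))). auto_derive. auto. Qed.

Lemma C1_plus_poly g K x0 N : cont01 g ->
  is_C1 (fun t => prim g t + K * (t - x0)^N) (fun t => ext g t + K * (INR N * (t - x0)^(pred N))).
Proof.
  intros Hg. split.
  - intros t. apply (derivable_pt_lim_plus (prim g) (fun t => K * (t - x0)^N)).
    apply prim_deriv; auto. apply poly_deriv.
  - apply (continuity_plus (ext g) (fun t => K * (INR N * (t - x0)^(pred N)))).
    apply ext_cont; auto. apply poly_dcont.
Qed.

Lemma pow_big r M : 1 < r -> exists N0, forall n, (n >= N0)%nat -> M <= r ^ n.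
Proof.
  intros Hr. destruct (Pow_x_infinity r) with (b := M) as [N0 HN]. rewrite Rabs_pos_eq; lra.
  exists N0. intros n Hn. specialize (HN n Hn). rewrite Rabs_pos_eq in HN. lra.
  apply pow_le; lra.
Qed.

Lemma ext_w_cont w x y : cont01 w -> forall c, x <= c <= y -> continuity_pt (ext w) c.
Proof. intros Hw c _. apply ext_cont; auto. Qed.

Lemma poly_cont K x0 N : continuity (fun t => K * (t - x0)^N).
Proof. intros t. apply derivable_continuous_pt. exists (K * (INR N * (t - x0)^(pred N))). apply poly_deriv. Qed.

Lemma poly2_deriv K x0 N t :
  derivable_pt_lim (fun t => K * (x0 - t)^N) t (- (K * (INR N * (x0 - t)^(pred N)))).
Proof. apply is_derive_Reals. auto_derive. auto. unfold Rminus. ring. Qed.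

Lemma poly2_dcont K x0 N : continuity (fun t => - (K * (INR N * (x0 - t)^(pred N)))).
Proof. intros t. apply continuity_pt_filterlim. apply (@ex_derive_continuous R_AbsRing R_NormedModule (fun t => - (K * (INR N * (x0 - t)^(pred N))))). auto_derive. auto. Qed.

Lemma poly2_cont K x0 N : continuity (fun t => K * (x0 - t)^N).
Proof. intros t. apply derivable_continuous_pt. exists (- (K * (INR N * (x0 - t)^(pred N)))). apply poly2_deriv. Qed.

Lemma C1_plus_poly2 g K x0 N : cont01 g ->
  is_C1 (fun t => prim g t + K * (x0 - t)^N) (fun t => ext g t + - (K * (INR N * (x0 - t)^(pred N)))).
Proof.
  intros Hg. split.
  - intros t. apply (derivable_pt_lim_plus (prim g) (fun t => K * (x0 - t)^N)).
    apply prim_deriv; auto. apply poly2_deriv.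
  - apply (continuity_plus (ext g) (fun t => - (K * (INR N * (x0 - t)^(pred N))))).
    apply ext_cont; auto. apply poly2_dcont.
Qed.

Lemma sub_upper_int H a w g : visc_sub H a w -> cont01 w -> cont01 g ->
  (forall z p, in01 z -> g z < p -> a < H z p) ->
  forall x y, 0 <= x -> x < y -> y < 1 -> w y - w x <= prim g y - prim g x.
Proof.
  intros Hv Hw Hg HP x y Hx Hxy Hy1.
  apply Rnot_lt_le; intro Hlt.
  set (G := prim g) in *.
  set (D := (w y - G y) - (w x - G x)).
  assert (HD : 0 < D) by (unfold D; lra).
  set (y' := (y + 1) / 2).
  set (r := (y' - x) / (y - x)).
  assert (Hr : 1 < r).
  { unfold r. apply Rmult_lt_reg_r with (y - x); [lra|].
    unfold Rdiv. rewrite Rmult_assoc, Rinv_l by lra. unfold y'; lra. }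
  set (Mv := 2 + 2 * Rabs ((w y' - G y') - (w y - G y)) / D).
  destruct (pow_big r Mv Hr) as [N0 HN0].
  set (N := S N0).
  assert (HrN : Mv <= r ^ N) by (apply HN0; unfold N; lia).
  assert (Hyx : 0 < (y - x) ^ N) by (apply pow_lt; lra).
  set (K := D / (2 * (y - x) ^ N)).
  assert (HK : 0 < K) by (unfold K; apply Rdiv_lt_0_compat; lra).
  set (psi := fun t => ext w t - G t - K * (t - x) ^ N).
  assert (in01x : in01 x) by (unfold in01; lra).
  assert (in01y : in01 y) by (unfold in01; lra).
  assert (in01y' : in01 y') by (unfold in01, y'; lra).
  assert (Px : psi x = w x - G x).
  { unfold psi. rewrite ext_id by auto. rewrite Rminus_diag. unfold N; simpl. ring. }
  assert (Py : psi y = w y - G y - D / 2).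
  { unfold psi. rewrite ext_id by auto. unfold K. field. lra. }
  assert (Py' : psi y' = w y' - G y' - D / 2 * r ^ N).
  { unfold psi. rewrite ext_id by auto.
    replace (y' - x) with (r * (y - x)) by (unfold r; field; lra).
    rewrite Rpow_mult_distr. unfold K. field. lra. }
  assert (Hyy' : psi y' < psi y).
  { rewrite Py', Py.
    assert (E : D / 2 * Mv = D + Rabs ((w y' - G y') - (w y - G y))) by (unfold Mv; field; lra).
    assert (D / 2 * Mv <= D / 2 * r ^ N) by (apply Rmult_le_compat_l; lra).
    pose proof (Rle_abs ((w y' - G y') - (w y - G y))).
    lra. }
  assert (Cpsi : forall c, x <= c <= y' -> continuity_pt psi c).
  { intros c _. unfold psi.
    apply (continuity_minus (fun t => ext w t - G t) (fun t => K * (t - x) ^ N)).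
    apply (continuity_minus (ext w) G). apply ext_cont; auto. apply prim_cont; auto.
    apply poly_cont. }
  destruct (continuity_ab_maj psi x y') as [z [Hzmax Hz]]; [unfold y'; lra|exact Cpsi|].
  assert (Hzy : psi y <= psi z) by (apply Hzmax; unfold y'; lra).
  assert (Hxy_ : psi x < psi y) by (rewrite Px, Py; unfold D; lra).
  assert (Hzx : x < z).
  { destruct (Rle_lt_or_eq_dec _ _ (proj1 Hz)) as [?|E]; auto. subst z. lra. }
  assert (Hzy' : z < y').
  { destruct (Rle_lt_or_eq_dec _ _ (proj2 Hz)) as [?|E]; auto. rewrite E in Hzy. lra. }
  assert (in01z : in01 z) by (assert (y' < 1) by (unfold y'; lra); unfold in01; lra).
  assert (Hz01 : 0 < z < 1) by (assert (y' < 1) by (unfold y'; lra); lra).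
  assert (Hsub := Hv z Hz01
     (fun t => prim g t + K * (t - x)^N) (fun t => ext g t + K * (INR N * (t - x)^(pred N)))
     (C1_plus_poly g K x N Hg)).
  assert (Hle : H z (ext g z + K * (INR N * (z - x)^(pred N))) <= a).
  { apply Hsub. exists (Rmin (z - x) (y' - z)). split. apply Rmin_pos; lra.
    intros t Ht. assert (Rmin (z - x) (y' - z) <= z - x) by apply Rmin_l.
    assert (Rmin (z - x) (y' - z) <= y' - z) by apply Rmin_r.
    apply Rabs_def2 in Ht.
    assert (Hpt : psi t <= psi z) by (apply Hzmax; lra).
    assert (y' < 1) by (unfold y'; lra).
    unfold psi in Hpt. rewrite !ext_id in Hpt by (unfold in01; lra).
    fold G. lra. }
  rewrite ext_id in Hle by auto.
  assert (Hpos : 0 < K * (INR N * (z - x)^(pred N))).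
  { apply Rmult_lt_0_compat; auto. apply Rmult_lt_0_compat.
    apply lt_0_INR. unfold N; lia. apply pow_lt; lra. }
  assert (a < H z (g z + K * (INR N * (z - x)^(pred N)))) by (apply HP; auto; lra).
  lra.
Qed.

Lemma sub_upper H a w g : visc_sub H a w -> cont01 w -> cont01 g ->
  (forall z p, in01 z -> g z < p -> a < H z p) ->
  forall x y, 0 <= x -> x <= y -> y <= 1 -> w y - w x <= prim g y - prim g x.
Proof.
  intros Hv Hw Hg HP x y Hx Hxy Hy1.
  destruct (Rle_lt_or_eq_dec _ _ Hxy) as [Hlt|E]; [|subst; lra].
  destruct (Rle_lt_or_eq_dec _ _ Hy1) as [Hy|E]; [apply (sub_upper_int H a); auto|].
  subst y. apply Rnot_lt_le; intro Hc.
  set (e := (w 1 - w x) - (prim g 1 - prim g x)).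
  assert (He : 0 < e) by (unfold e; lra).
  assert (in1 : in01 1) by (unfold in01; lra).
  destruct (Hw 1 in1 (e / 2)) as [d1 [Hd1 Hd1']]; [lra|].
  destruct (cont_pt_ed _ _ (prim_cont g Hg 1) (e / 2)) as [d2 [Hd2 Hd2']]; [lra|].
  destruct (min3 d1 d2 (1 - x)) as [d [Hd [Hda [Hdb Hdc]]]]; auto; [lra|].
  set (y0 := 1 - d / 2).
  assert (A := sub_upper_int H a w g Hv Hw Hg HP x y0 Hx ltac:(unfold y0; lra) ltac:(unfold y0; lra)).
  assert (B : Rabs (w y0 - w 1) < e / 2).
  { apply Hd1'. unfold in01, y0; lra. unfold y0. rewrite Rabs_left; lra. }
  assert (C : Rabs (prim g y0 - prim g 1) < e / 2).
  { apply Hd2'. unfold y0. rewrite Rabs_left; lra. }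
  apply Rabs_def2 in B. apply Rabs_def2 in C. unfold e in *. lra.
Qed.

Lemma sub_lower_int H a w g : visc_sub H a w -> cont01 w -> cont01 g ->
  (forall z p, in01 z -> p < g z -> a < H z p) ->
  forall x y, 0 < x -> x < y -> y <= 1 -> prim g y - prim g x <= w y - w x.
Proof.
  intros Hv Hw Hg HP x y Hx Hxy Hy1.
  apply Rnot_lt_le; intro Hlt.
  set (G := prim g) in *.
  set (D := (w x - G x) - (w y - G y)).
  assert (HD : 0 < D) by (unfold D; lra).
  set (x' := x / 2).
  set (r := (y - x') / (y - x)).
  assert (Hr : 1 < r).
  { unfold r. apply Rmult_lt_reg_r with (y - x); [lra|].
    unfold Rdiv. rewrite Rmult_assoc, Rinv_l by lra. unfold x'; lra. }
  set (Mv := 2 + 2 * Rabs ((w x' - G x') - (w x - G x)) / D).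
  destruct (pow_big r Mv Hr) as [N0 HN0].
  set (N := S N0).
  assert (HrN : Mv <= r ^ N) by (apply HN0; unfold N; lia).
  assert (Hyx : 0 < (y - x) ^ N) by (apply pow_lt; lra).
  set (K := D / (2 * (y - x) ^ N)).
  assert (HK : 0 < K) by (unfold K; apply Rdiv_lt_0_compat; lra).
  set (psi := fun t => ext w t - G t - K * (y - t) ^ N).
  assert (in01x : in01 x) by (unfold in01; lra).
  assert (in01y : in01 y) by (unfold in01; lra).
  assert (in01x' : in01 x') by (unfold in01, x'; lra).
  assert (Py : psi y = w y - G y).
  { unfold psi. rewrite ext_id by auto. rewrite Rminus_diag. unfold N; simpl. ring. }
  assert (Px : psi x = w x - G x - D / 2).
  { unfold psi. rewrite ext_id by auto. unfold K. field. lra. }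
  assert (Px' : psi x' = w x' - G x' - D / 2 * r ^ N).
  { unfold psi. rewrite ext_id by auto.
    replace (y - x') with (r * (y - x)) by (unfold r; field; lra).
    rewrite Rpow_mult_distr. unfold K. field. lra. }
  assert (Hxx' : psi x' < psi x).
  { rewrite Px', Px.
    assert (E : D / 2 * Mv = D + Rabs ((w x' - G x') - (w x - G x))) by (unfold Mv; field; lra).
    assert (D / 2 * Mv <= D / 2 * r ^ N) by (apply Rmult_le_compat_l; lra).
    pose proof (Rle_abs ((w x' - G x') - (w x - G x))).
    lra. }
  assert (Cpsi : forall c, x' <= c <= y -> continuity_pt psi c).
  { intros c _. unfold psi.
    apply (continuity_minus (fun t => ext w t - G t) (fun t => K * (y - t) ^ N)).
    apply (continuity_minus (ext w) G). apply ext_cont; auto. apply prim_cont; auto.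
    apply poly2_cont. }
  destruct (continuity_ab_maj psi x' y) as [z [Hzmax Hz]]; [unfold x'; lra|exact Cpsi|].
  assert (Hzx : psi x <= psi z) by (apply Hzmax; unfold x'; lra).
  assert (Hxy_ : psi y < psi x) by (rewrite Px, Py; unfold D; lra).
  assert (Hzy : z < y).
  { destruct (Rle_lt_or_eq_dec _ _ (proj2 Hz)) as [?|E]; auto. subst z. lra. }
  assert (Hzx' : x' < z).
  { destruct (Rle_lt_or_eq_dec _ _ (proj1 Hz)) as [?|E]; auto. rewrite <- E in Hzx. lra. }
  assert (Hx'0 : 0 < x') by (unfold x'; lra).
  assert (in01z : in01 z) by (unfold in01; lra).
  assert (Hz01 : 0 < z < 1) by lra.
  assert (Hsub := Hv z Hz01
     (fun t => prim g t + K * (y - t)^N) (fun t => ext g t + - (K * (INR N * (y - t)^(pred N))))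
     (C1_plus_poly2 g K y N Hg)).
  assert (Hle : H z (ext g z + - (K * (INR N * (y - z)^(pred N)))) <= a).
  { apply Hsub. exists (Rmin (z - x') (y - z)). split. apply Rmin_pos; lra.
    intros t Ht. assert (Rmin (z - x') (y - z) <= z - x') by apply Rmin_l.
    assert (Rmin (z - x') (y - z) <= y - z) by apply Rmin_r.
    apply Rabs_def2 in Ht.
    assert (Hpt : psi t <= psi z) by (apply Hzmax; lra).
    unfold psi in Hpt. rewrite !ext_id in Hpt by (unfold in01; lra).
    fold G. lra. }
  rewrite ext_id in Hle by auto.
  assert (Hpos : 0 < K * (INR N * (y - z)^(pred N))).
  { apply Rmult_lt_0_compat; auto. apply Rmult_lt_0_compat.
    apply lt_0_INR. unfold N; lia. apply pow_lt; lra. }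
  assert (a < H z (g z + - (K * (INR N * (y - z)^(pred N))))) by (apply HP; auto; lra).
  lra.
Qed.

Lemma sub_lower H a w g : visc_sub H a w -> cont01 w -> cont01 g ->
  (forall z p, in01 z -> p < g z -> a < H z p) ->
  forall x y, 0 <= x -> x <= y -> y <= 1 -> prim g y - prim g x <= w y - w x.
Proof.
  intros Hv Hw Hg HP x y Hx Hxy Hy1.
  destruct (Rle_lt_or_eq_dec _ _ Hxy) as [Hlt|E]; [|subst; lra].
  destruct (Rle_lt_or_eq_dec _ _ Hx) as [Hx0|E]; [apply (sub_lower_int H a); auto|].
  subst x. apply Rnot_lt_le; intro Hc.
  set (e := (prim g y - prim g 0) - (w y - w 0)).
  assert (He : 0 < e) by (unfold e; lra).
  assert (in0 : in01 0) by (unfold in01; lra).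
  destruct (Hw 0 in0 (e / 2)) as [d1 [Hd1 Hd1']]; [lra|].
  destruct (cont_pt_ed _ _ (prim_cont g Hg 0) (e / 2)) as [d2 [Hd2 Hd2']]; [lra|].
  destruct (min3 d1 d2 y) as [d [Hd [Hda [Hdb Hdc]]]]; auto.
  set (x0 := d / 2).
  assert (A := sub_lower_int H a w g Hv Hw Hg HP x0 y ltac:(unfold x0; lra) ltac:(unfold x0; lra) Hy1).
  assert (B : Rabs (w x0 - w 0) < e / 2).
  { apply Hd1'. unfold in01, x0; lra. unfold x0. rewrite Rabs_pos_eq; lra. }
  assert (C : Rabs (prim g x0 - prim g 0) < e / 2).
  { apply Hd2'. unfold x0. rewrite Rabs_pos_eq; lra. }
  apply Rabs_def2 in B. apply Rabs_def2 in C. unfold e in *. lra.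
Qed.

Lemma deriv_sign k x L : derivable_pt_lim k x L -> 0 < L -> forall d, 0 < d ->
  exists t, x - d < t < x /\ k t < k x.
Proof.
  intros Hk HL d Hd. destruct (Hk (L / 2)) as [del Hdel]; [lra|].
  set (h := - Rmin d del / 2).
  assert (Hm : 0 < Rmin d del) by (apply Rmin_pos; [lra|apply cond_pos]).
  assert (Rmin d del <= d) by apply Rmin_l. assert (Rmin d del <= del) by apply Rmin_r.
  assert (Hh : h < 0) by (unfold h; lra).
  specialize (Hdel h ltac:(lra) ltac:(rewrite Rabs_left by lra; unfold h; lra)).
  apply Rabs_def2 in Hdel. destruct Hdel as [_ Hdel].
  exists (x + h). split. unfold h; lra.
  assert (A : 0 < (k (x + h) - k x) / h) by lra.
  assert (B : (k (x + h) - k x) / h * h = k (x + h) - k x) by (field; lra).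
  assert (C : (k (x + h) - k x) / h * h < 0) by (apply Rmult_pos_neg; lra).
  lra.
Qed.

Lemma C1_comb f g al be c : cont01 f -> cont01 g ->
  is_C1 (fun t => al * prim f t + be * prim g t + c) (fun t => al * ext f t + be * ext g t).
Proof.
  intros Hf Hg. split.
  - intros t. replace (al * ext f t + be * ext g t) with (al * ext f t + be * ext g t + 0) by ring.
    apply (derivable_pt_lim_plus (fun t => al * prim f t + be * prim g t) (fun _ => c)).
    + apply (derivable_pt_lim_plus (fun t => al * prim f t) (fun t => be * prim g t)).
      * apply (derivable_pt_lim_scal (prim f) al). apply prim_deriv; auto.
      * apply (derivable_pt_lim_scal (prim g) be). apply prim_deriv; auto.
    + apply (derivable_pt_lim_const c).
  - apply (continuity_plus (fun t => al * ext f t) (fun t => be * ext g t)).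
    + apply (continuity_scal (ext f) al). apply ext_cont; auto.
    + apply (continuity_scal (ext g) be). apply ext_cont; auto.
Qed.

Theorem proposition5p3 (H : R -> R -> R) (mH : R -> R) (aH a : R) (sigma w : R -> R)
  (Hcont : H_cont01 H) (Hcoer : coercive01 H) (Hqc : quasiconvex01 H)
  (Hint : interior_cond01 H)
  (HmH : forall s, in01 s -> is_min_value (H s) (mH s))
  (HaH : is_max_on mH in01 aH)
  (Ha : aH <= a)
  (Hconst : a = aH -> forall s t, in01 s -> in01 t -> mH s = mH t)
  (Hsig : forall s, in01 s -> is_max_elem (fun p => H s p = a) (sigma s))
  (Hw : cont01 w) (Hvisc : visc_sol H a w) :
  (forall phi dphi, is_C1 phi dphi -> phi 1 = w 1 ->
     (exists d, 0 < d /\ forall x, 1 - d < x < 1 -> phi x <= w x) ->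
     a <= H 1 (dphi 1))
  <->
  (forall s, in01 s ->
     exists pr : Riemann_integrable sigma 0 s, w s = w 0 + RiemannInt pr).
Proof.
  destruct Hvisc as [Hvsub Hvsup].
  assert (HmHa : forall z, in01 z -> mH z <= aH) by (intros; apply (proj2 HaH); auto).
  assert (Hsc : cont01 sigma).
  { apply (lvl_cont H a mH sigma); auto. intros z Hz. specialize (HmHa z Hz). lra. }
  assert (Habove : forall z p, in01 z -> sigma z < p -> a < H z p).
  { intros z p Hz Hp. apply (above_max H z a (sigma z)); auto. }
  assert (in0 : in01 0) by (unfold in01; lra).
  assert (in1 : in01 1) by (unfold in01; lra).
  assert (Rep : forall s, in01 s -> w s = w 0 + prim sigma s ->
     exists pr : Riemann_integrable sigma 0 s, w s = w 0 + RiemannInt pr).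
  { intros s Hs E. destruct (prim_Riemann sigma s Hsc Hs) as [pr Hpr]. exists pr. lra. }
  split.
  - intros H1 s Hs. apply Rep; auto.
    assert (UP := sub_upper H a w sigma Hvsub Hw Hsc Habove 0 s ltac:(lra)
       ltac:(unfold in01 in Hs; lra) ltac:(unfold in01 in Hs; lra)).
    rewrite prim0 in UP.
    destruct (Req_dec a aH) as [Eq|Neq].
    +
      destruct (proj1 HaH) as [s0 [Hs0 Hms0]].
      assert (Hm : forall z, in01 z -> mH z = a).
      { intros z Hz. rewrite (Hconst Eq z s0 Hz Hs0). lra. }
      assert (Hbelow : forall z p, in01 z -> p < sigma z -> a < H z p).
      { intros z p Hz Hp. destruct (HmH z Hz) as [_ Hmin].
        destruct (Rle_lt_or_eq_dec _ _ (Hmin p)) as [?|E]; [rewrite Hm in *; auto|].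
        exfalso. apply (strict_min H z (mH z) p (sigma z)); auto.
        rewrite (proj1 (Hsig z Hz)). rewrite Hm; auto. }
      assert (LO := sub_lower H a w sigma Hvsub Hw Hsc Hbelow 0 s ltac:(lra)
        ltac:(unfold in01 in Hs; lra) ltac:(unfold in01 in Hs; lra)).
      rewrite prim0 in LO. lra.
    +
      assert (HaHa : aH < a) by lra.
      set (b := (a + aH) / 2).
      assert (Htex : forall z, {v | in01 z -> is_max_elem (fun p => H z p = b) v}).
      { intros z. apply constructive_indefinite_description.
        destruct (in01_dec z) as [Hz|Hz].
        - destruct (lvl_exists H z (mH z) b Hcont Hcoer Hz (HmH z Hz)) as [v Hv].
          specialize (HmHa z Hz). unfold b; lra. exists v; auto.
        - exists 0. intros; contradiction. }
      set (tau := fun z => proj1_sig (Htex z)).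
      assert (Htau : forall z, in01 z -> is_max_elem (fun p => H z p = b) (tau z))
        by (intros z Hz; exact (proj2_sig (Htex z) Hz)).
      assert (Htc : cont01 tau).
      { apply (lvl_cont H b mH tau); auto. intros z Hz; specialize (HmHa z Hz); unfold b; lra. }
      assert (Hts : forall z, in01 z -> tau z < sigma z).
      { intros z Hz. assert (Eb := proj1 (Htau z Hz)). assert (Ea := proj1 (Hsig z Hz)).
        simpl in Eb, Ea.
        destruct (Rlt_le_dec (tau z) (sigma z)) as [?|Hle]; auto. exfalso.
        destruct (Rle_lt_or_eq_dec _ _ Hle) as [Hl|E].
        - assert (a < H z (tau z)) by (apply Habove; auto). unfold b in Eb; lra.
        - rewrite E in Ea. unfold b in Eb; lra. }
      assert (Hmid : forall z th, in01 z -> 0 < th < 1 -> H z ((1 - th) * sigma z + th * tau z) < a).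
      { intros z th Hz Hth. specialize (Hts z Hz).
        apply (interior_lt H z (tau z) (sigma z)); auto.
        rewrite (proj1 (Htau z Hz)). unfold b; lra.
        rewrite (proj1 (Hsig z Hz)). lra.
        assert (0 < (1 - th) * (sigma z - tau z)) by (apply Rmult_lt_0_compat; lra).
        assert (0 < th * (sigma z - tau z)) by (apply Rmult_lt_0_compat; lra).
        split; nra. }
      destruct (Rle_lt_or_eq_dec _ _ UP) as [Hlt|E]; [|lra].
      exfalso.
      set (S := prim sigma) in *. set (T := prim tau).
      set (D := S s - (w s - w 0)).
      assert (HD : 0 < D) by (unfold D; lra).
      set (X := Rabs (S s - T s)).
      assert (HX : 0 <= X) by apply Rabs_pos.
      set (th := D / (2 * (X + D))).
      assert (Eth : th * (2 * (X + D)) = D) by (unfold th; field; lra).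
      assert (Hth0 : 0 < th) by (unfold th; apply Rdiv_lt_0_compat; lra).
      assert (Hth1 : th < 1) by nra.
      assert (Hkey : th * (S s - T s) <= D / 2).
      { assert (th * (S s - T s) <= th * X) by (apply Rmult_le_compat_l; [lra|apply Rle_abs]).
        nra. }
      set (phi0 := fun t => (1 - th) * S t + th * T t + 0).
      set (dphi0 := fun t => (1 - th) * ext sigma t + th * ext tau t).
      assert (HC1 : is_C1 phi0 dphi0) by (apply C1_comb; auto).
      set (v := fun t => ext w t - phi0 t).
      assert (Cv : forall c, 0 <= c <= 1 -> continuity_pt v c).
      { intros c _. apply (continuity_minus (ext w) phi0). apply ext_cont; auto.
        intros t. apply derivable_continuous_pt. exists (dphi0 t). apply (proj1 HC1). }
      destruct (continuity_ab_min v 0 1) as [z [Hzmin Hz]]; [lra|exact Cv|].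
      assert (Hz01 : in01 z) by (unfold in01; lra).
      assert (v0 : v 0 = w 0).
      { unfold v, phi0. rewrite ext_id by auto. unfold S, T. rewrite !prim0. ring. }
      assert (vs : v s <= w 0 - D / 2).
      { unfold v, phi0. rewrite ext_id by auto. unfold D in *. lra. }
      assert (Hvz : v z <= v s) by (apply Hzmin; unfold in01 in Hs; lra).
      assert (Hz0 : 0 < z).
      { destruct (Rle_lt_or_eq_dec _ _ (proj1 Hz)) as [?|E]; auto. rewrite <- E in Hvz. lra. }
      destruct (Rle_lt_or_eq_dec _ _ (proj2 Hz)) as [Hz1|Hz1].
      * assert (A : a <= H z (dphi0 z)).
        { apply (Hvsup z (conj Hz0 Hz1) phi0 dphi0 HC1).
          exists (Rmin z (1 - z)). split. apply Rmin_pos; lra.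
          intros t Ht. assert (Rmin z (1 - z) <= z) by apply Rmin_l.
          assert (Rmin z (1 - z) <= 1 - z) by apply Rmin_r.
          apply Rabs_def2 in Ht.
          assert (Hvt : v z <= v t) by (apply Hzmin; lra).
          unfold v in Hvt. rewrite !ext_id in Hvt by (unfold in01; lra). lra. }
        unfold dphi0 in A. rewrite !ext_id in A by auto.
        assert (B := Hmid z th Hz01 (conj Hth0 Hth1)). lra.
      * subst z.
        assert (A : a <= H 1 (dphi0 1)).
        { apply (H1 (fun t => (1 - th) * S t + th * T t + (w 1 - phi0 1)) dphi0).
          - apply C1_comb; auto.
          - unfold phi0. ring.
          - exists 1. split. lra. intros x Hx.
            assert (Hvt : v 1 <= v x) by (apply Hzmin; lra).
            unfold v in Hvt. rewrite !ext_id in Hvt by (unfold in01; lra).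
            unfold phi0 in *. lra. }
        unfold dphi0 in A. rewrite !ext_id in A by auto.
        assert (B := Hmid 1 th in1 (conj Hth0 Hth1)). lra.
  - intros H2 phi dphi HC1 Hphi1 [d [Hd Hsub]].
    assert (Wt : forall t, in01 t -> w t = w 0 + prim sigma t).
    { intros t Ht. destruct (H2 t Ht) as [pr E].
      destruct (prim_Riemann sigma t Hsc Ht) as [pr' E'].
      rewrite (RiemannInt_P5 pr pr') in E. lra. }
    assert (Hge : sigma 1 <= dphi 1).
    { apply Rnot_lt_le; intro Hlt.
      set (k := fun t => prim sigma t - phi t).
      assert (Hk : derivable_pt_lim k 1 (ext sigma 1 - dphi 1)).
      { apply (derivable_pt_lim_minus (prim sigma) phi). apply prim_deriv; auto. apply (proj1 HC1). }
      rewrite ext_id in Hk by auto.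
      destruct (deriv_sign k 1 _ Hk ltac:(lra) (Rmin d 1)) as [t [Ht Hkt]].
      { apply Rmin_pos; lra. }
      assert (Rmin d 1 <= d) by apply Rmin_l. assert (Rmin d 1 <= 1) by apply Rmin_r.
      assert (Hpt : phi t <= w t) by (apply Hsub; lra).
      unfold k in Hkt. rewrite Hphi1 in Hkt.
      rewrite (Wt 1 in1) in Hkt. rewrite (Wt t) in Hpt by (unfold in01; lra). lra. }
    destruct (Rle_lt_or_eq_dec _ _ Hge) as [Hl|E].
    + left. apply Habove; auto.
    + rewrite <- E. rewrite (proj1 (Hsig 1 in1)). lra.
Qed.
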